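(* The size $z_{SS}$ of the non-self-referencing LZSS factorization satisfies: substitutions: $\limsup_{n\to\infty}\mathsf{MS}_{\mathrm{sub}}(z_{SS},n)\le 3$ and $\mathsf{AS}_{\mathrm{sub}}(z_{SS},n)\le 2z_{SS}-2$; insertions: $\mathsf{MS}_{\mathrm{ins}}(z_{SS},n)\le 2$ and $\mathsf{AS}_{\mathrm{ins}}(z_{SS},n)\le z_{SS}$; deletions: $\limsup_{n\to\infty}\mathsf{MS}_{\mathrm{del}}(z_{SS},n)\le 3$ and $\mathsf{AS}_{\mathrm{del}}(z_{SS},n)\le 2z_{SS}-3$, where $\mathsf{AS}_\ast(z_{SS},n)\le a z_{SS}-c$ means $z_{SS}(T')-z_{SS}(T)\le a\,z_{SS}(T)-c$ for all $T$ of length $n$ and all $T'$ obtained from $T$ by one edit of that type.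
   Context: Strings are over an alphabet $\Sigma$; $\mathsf{ed}$ is the edit distance. $\mathsf{MS}_{\mathrm{sub}}(C,n)=\max_{T\in\Sigma^n}\{C(T')/C(T): T'\in\Sigma^n,\ \mathsf{ed}(T,T')=1\}$, with $\mathsf{MS}_{\mathrm{ins}},\mathsf{MS}_{\mathrm{del}}$ analogous for $T'$ of length $n+1$, resp. $n-1$, and $\mathsf{AS}_\ast$ analogous with $C(T')-C(T)$. The non-self-referencing LZSS factorization of $T$ is $T=f_1\cdots f_z$ where each $f_i$ is either the first occurrence in $T$ of a character, or the longest prefix of $f_i\cdots f_z$ that occurs as a substring of $f_1\cdots f_{i-1}$; $z_{SS}(T)=z$. *)

(* Defs.v *)
From mathcomp Require Import all_boot all_order all_algebra.
Set Implicit Arguments. Unset Strict Implicit. Unset Printing Implicit Defensive.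

Section LZSS.
Variable A : eqType.

(* Levenshtein edit distance (unit-cost insertions, deletions, substitutions). *)
Fixpoint ed (s t : seq A) {struct s} : nat :=
  match s with
  | [::] => size t
  | a :: s' =>
      let fix edt (t : seq A) : nat :=
        match t with
        | [::] => size s
        | b :: t' => minn (minn (ed s' t).+1 (edt t').+1) (ed s' t' + (a != b))
        end in
      edt t
  end.

Definition longest_prefix_in (P R : seq A) : nat :=
  foldr maxn 0 [seq k <- iota 0 (size R).+1 | infix (take k R) P].

(* Greedy non-self-referencing LZSS factorization of the remaining text R,
   given the already-factorized prefix P.  A factor is the longest prefix of R
   occurring in P, or a single (fresh) character if that prefix is empty. *)
Fixpoint lzss_aux (fuel : nat) (P R : seq A) : seq (seq A) :=
  match fuel with
  | 0 => [::]
  | fuel'.+1 =>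
      match R with
      | [::] => [::]
      | _ :: _ =>
          let k := maxn (longest_prefix_in P R) 1 in
          take k R :: lzss_aux fuel' (P ++ take k R) (drop k R)
      end
  end.

Definition lzss (T : seq A) : seq (seq A) := lzss_aux (size T) [::] T.

Definition z_SS (T : seq A) : nat := size (lzss T).

End LZSS.

(* Main.v *)
Require Import Defs.
From mathcomp Require Import all_boot all_order all_algebra zify.
Import Order.TTheory GRing.Theory Num.Theory.

Section Aux.
Variable A : eqType.


Lemma cat_eq_cat {s1 s2 t1 t2 : seq A} : s1 ++ s2 = t1 ++ t2 ->
  exists u, (s1 = t1 ++ u /\ t2 = u ++ s2) \/ (t1 = s1 ++ u /\ s2 = u ++ t2).
Proof.
elim: s1 t1 => [|a s1 IH] t1 /=.
  by move=> ->; exists t1; right.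
case: t1 => [|b t1] /=.
  by move=> <-; exists (a :: s1); left.
by case=> -> /IH [u [[-> ->]|[-> ->]]]; exists u; [left|right].
Qed.

Fixpoint vparse (pre : seq A) (gs : seq (seq A)) : Prop :=
  if gs is g :: gs' then (size g <= 1 \/ infix g pre) /\ vparse (pre ++ g) gs'
  else True.

Definition cnt (gs : seq (seq A)) := count (fun s : seq A => 0 < size s) gs.

Lemma le_foldr_max (x : nat) (s : seq nat) : x \in s -> x <= foldr maxn 0 s.
Proof.
elim: s => //= y s IH; rewrite in_cons => /orP [/eqP ->|/IH h].
  by rewrite leq_maxl.
by rewrite (leq_trans h) // leq_maxr.
Qed.

Lemma foldr_max_ind (Q : nat -> Prop) (s : seq nat) : Q 0 -> (forall y, y \in s -> Q y) ->
  Q (foldr maxn 0 s).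
Proof.
elim: s => //= y s IH Q0 H.
have Hs : Q (foldr maxn 0 s) by apply: IH => // z zs; apply: H; rewrite in_cons zs orbT.
case: (leqP y (foldr maxn 0 s)) => h.
  by [].
by apply: H; rewrite in_cons eqxx.
Qed.

Lemma lp_ge (P R : seq A) e : e <= size R -> infix (take e R) P -> e <= longest_prefix_in P R.
Proof.
move=> eR inf; apply: le_foldr_max; rewrite mem_filter inf mem_iota /=; lia.
Qed.

Lemma lp_spec (P R : seq A) : infix (take (longest_prefix_in P R) R) P.
Proof.
apply: (@foldr_max_ind (fun k => infix (take k R) P)).
  by rewrite take0 infix0s.
by move=> y; rewrite mem_filter => /andP [].
Qed.

Lemma greedy_ok fuel (P R : seq A) : size R <= fuel ->
  vparse P (lzss_aux fuel P R) /\ flatten (lzss_aux fuel P R) = R /\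
  cnt (lzss_aux fuel P R) = size (lzss_aux fuel P R).
Proof.
elim: fuel P R => [|f IH] P R /=.
  by rewrite leqn0 => /nilP ->.
case: R => [|r R] // hs.
set k := maxn _ 1.
have k1 : 0 < k by rewrite leq_max orbT.
have hsz : size (drop k (r :: R)) <= f by rewrite size_drop /=; move: hs k1 => /=; lia.
have [h1 [h2 h3]] := IH (P ++ take k (r :: R)) (drop k (r :: R)) hsz.
split; [split => //|split].
- rewrite /k; case: (leqP (longest_prefix_in P (r :: R)) 1) => h.
    by left; rewrite /= take0.
  by right; apply: lp_spec.
- by rewrite /= h2 cat_take_drop.
- rewrite /cnt /= -/(cnt _) h3 size_take /=.
  by clear -k1; case: k k1 => [|k] //; case: ifP.
Qed.


Lemma opt (gs : seq (seq A)) : forall (pre : seq A) fuel (P R : seq A),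
  vparse pre gs -> pre ++ flatten gs = P ++ R -> size pre <= size P ->
  size (lzss_aux fuel P R) <= cnt gs.
Proof.
elim: gs => [|g gs IH] pre fuel P R /=.
  move=> _; rewrite cats0 => E hs.
  have -> : R = [::] by apply: size0nil; have := congr1 size E; rewrite size_cat; lia.
  by case: fuel.
case=> vg vgs E hs.
have E' : (pre ++ g) ++ flatten gs = P ++ R by rewrite -catA.
case: (leqP (size pre + size g) (size P)) => hle.
  apply: leq_trans (IH _ _ _ _ vgs E' _) _; first by rewrite size_cat.
  by rewrite /cnt /= leq_addl.
have gne : 0 < size g by lia.
case: fuel => [|f] //=. case: R E E' => [|r R] E E' //=.
set k := maxn _ 1.
rewrite /cnt /= gne add1n ltnS -/(cnt gs).
have [u [u2 [Pu [gu Ru]]]] : exists u u2, P = pre ++ u /\ g = u ++ u2 /\ r :: R = u2 ++ flatten gs.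
  have [u [[pu ru]|[pu ru]]] := cat_eq_cat E.
    have u0 : u = [::] by apply: size0nil; move: hs; rewrite pu size_cat; lia.
    by exists [::], g; rewrite pu ru u0 !cats0.
  have [u2 [[gu2 ru2]|[gu2 ru2]]] := cat_eq_cat ru.
    by exists u, u2.
  by move: hle; rewrite pu gu2 !size_cat; lia.
apply: (IH (pre ++ g)) => //; first by rewrite -(catA P) cat_take_drop.
rewrite !size_cat size_take Pu gu size_cat.
have ku2 : size u2 <= k.
  case: vg => [sg|ig].
    by apply: leq_trans (_ : 1 <= k); [move: sg; rewrite gu size_cat; lia | rewrite leq_maxr].
  apply: leq_trans (leq_maxl _ 1); apply: lp_ge.
    by rewrite Ru size_cat leq_addr.
  rewrite Ru take_size_cat //.
  apply: infix_trans (suffix_infix u u2) _; rewrite -gu.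
  apply: infix_trans ig _; rewrite Pu; exact: prefix_infix.
have : size u2 <= size (r :: R) by rewrite Ru size_cat leq_addr.
case: ifP => _; rewrite size_cat; lia.
Qed.

Lemma z_le (T : seq A) gs : vparse [::] gs -> flatten gs = T -> z_SS T <= cnt gs.
Proof. by move=> v f; apply: (@opt gs [::] (size T) [::] T v) => //=; rewrite f. Qed.

Lemma z_greedy (T : seq A) : vparse [::] (lzss T) /\ flatten (lzss T) = T /\ cnt (lzss T) = z_SS T.
Proof. exact: greedy_ok. Qed.


Lemma cnt_cons (g : seq A) gs : cnt (g :: gs) = (0 < size g) + cnt gs.
Proof. by []. Qed.

Lemma pos_size (s : seq A) : (0 < size s) <= size s.
Proof. by case: s. Qed.

Section Edit.
Variables U x m V : seq A.
Hypothesis hx : size x <= 1.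
Hypothesis hm : size m <= 1.

Lemma inU g V1 : infix g U -> infix g (U ++ m ++ V1).
Proof. exact: infix_catr. Qed.

Lemma inV g V1 : infix g V1 -> infix g (U ++ m ++ V1).
Proof. by move=> h; do 2 apply: infix_catl. Qed.

Lemma decomp g V1 : infix g (U ++ x ++ V1) -> exists g1 g2 g3,
  [/\ g = g1 ++ g2 ++ g3, infix g1 (U ++ m ++ V1), infix g3 (U ++ m ++ V1) & size g2 <= size x].
Proof.
case/infixP => p [q E].
have [u [[Up gq]|[pU xq]]] := cat_eq_cat E.
- have [w [[gu xw]|[uw qx]]] := cat_eq_cat gq.
  + have [w' [[xw' qw]|[wx Vw]]] := cat_eq_cat xw.
    * exists u, w, [::]; split.
      - by rewrite /= ?cats0.
      - by apply: inU; rewrite Up; apply: suffix_infix.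
      - exact: infix0s.
      - by rewrite xw' size_cat leq_addr.
    * exists u, x, w'; split.
      - by rewrite gu wx.
      - by apply: inU; rewrite Up; apply: suffix_infix.
      - by apply: inV; rewrite Vw; apply: prefix_infix.
      - by [].
  + exists g, [::], [::]; split.
    - by rewrite /= ?cats0.
    - by apply: inU; rewrite Up uw; apply: infix_infix.
    - exact: infix0s.
    - by [].
- have [w [[xw gw]|[uw Vw]]] := cat_eq_cat xq.
  + have [w' [[gw' Vw']|[ww' qw']]] := cat_eq_cat gw.
    * exists [::], w, w'; split.
      - by [].
      - exact: infix0s.
      - by apply: inV; rewrite Vw'; apply: prefix_infix.
      - by rewrite xw size_cat leq_addl.
    * exists [::], g, [::]; split.
      - by rewrite /= ?cats0.
      - exact: infix0s.
      - exact: infix0s.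
      - by rewrite xw ww' !size_cat; lia.
  + exists g, [::], [::]; split.
    - by rewrite /= ?cats0.
    - by apply: inV; rewrite Vw; apply: infix_infix.
    - exact: infix0s.
    - by [].
Qed.

Lemma after gs : forall V1 V2, vparse (U ++ x ++ V1) gs -> flatten gs = V2 ->
  exists gs', [/\ vparse (U ++ m ++ V1) gs', flatten gs' = V2 &
                  cnt gs' <= (2 + size x) * cnt gs].
Proof.
elim: gs => [|g gs IH] V1 V2.
  by move=> _ <-; exists [::].
case=> vg vgs E.
have [gs'' [v'' f'' c'']] : exists gs', [/\ vparse (U ++ m ++ (V1 ++ g)) gs', flatten gs' = flatten gs &
                  cnt gs' <= (2 + size x) * cnt gs].
  by apply: IH => //; rewrite -!catA in vgs.
have v2 : vparse ((U ++ m ++ V1) ++ g) gs'' by rewrite -!catA.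
case: (posnP (size g)) => g0.
  move/size0nil: g0 => g0; subst g.
  exists gs''; split; [by rewrite cats0 in v2 | by rewrite f'' -E | by rewrite cnt_cons].
have cg : cnt (g :: gs) = 1 + cnt gs by rewrite cnt_cons g0.
case: vg => [sg|ig].
  exists (g :: gs''); split.
  - by split => //; left.
  - by rewrite -E /= f''.
  - by rewrite cnt_cons cg; have := leq_b1 (0 < size g); lia.
have [g1 [g2 [g3 [gE i1 i3 s2]]]] := decomp _ _ ig.
exists [:: g1, g2, g3 & gs'']; split.
- split; first by right.
  split; first by left; lia.
  split; first by right; do 2 apply: infix_catr.
  by rewrite -!catA -gE.
- by rewrite -E /= f'' gE !catA.
- rewrite cg !cnt_cons; have := leq_b1 (0 < size g1); have := leq_b1 (0 < size g3);
  have := pos_size g2; lia.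
Qed.

Lemma split_x u F : 0 < size u -> x ++ V = u ++ F ->
  exists V1, u = x ++ V1 /\ V = V1 ++ F.
Proof.
move=> u0 E; have [w [[xu Fw]|[ux Vw]]] := cat_eq_cat E.
  have w0 : w = [::] by apply: size0nil; move: hx; rewrite xu size_cat; lia.
  by exists [::]; rewrite xu Fw w0 !cats0.
by exists w.
Qed.

Lemma before gs : forall pre W, U = pre ++ W -> vparse pre gs -> flatten gs = W ++ x ++ V ->
 exists gs' a r pB, [/\ vparse pre gs', flatten gs' = W ++ m ++ V,
   cnt gs' <= a + pB + (2 + size x) * r &
  ((cnt gs = a + 1 + r /\ pB <= 2 + size m /\ (pre = [::] -> a = 0 -> pB + size x <= size m + 1))
   \/ (cnt gs = a /\ r = 0 /\ size x = 0 /\ pB <= size m))].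
Proof.
elim: gs => [|g gs IH] pre W UE.
  move=> _ /= E.
  have sz : size (W ++ x ++ V) = 0 by rewrite -E.
  move: sz; rewrite !size_cat => sz.
  have W0 : W = [::] by apply: size0nil; lia.
  have V0 : V = [::] by apply: size0nil; lia.
  exists [:: m], 0, 0, (size m); split.
  - by split => //; left.
  - by rewrite W0 V0 /= !cats0.
  - by rewrite /cnt /= addn0; have := pos_size m; lia.
  - by right; split => //; split => //; split => //; lia.
case=> vg vgs E.
have caseA : forall W', W = g ++ W' -> flatten gs = W' ++ x ++ V ->
  exists gs' a r pB, [/\ vparse pre gs', flatten gs' = W ++ m ++ V,
   cnt gs' <= a + pB + (2 + size x) * r &
  ((cnt (g :: gs) = a + 1 + r /\ pB <= 2 + size m /\ (pre = [::] -> a = 0 -> pB + size x <= size m + 1))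
   \/ (cnt (g :: gs) = a /\ r = 0 /\ size x = 0 /\ pB <= size m))].
  move=> W' WE FE.
  have [gs' [a [r [pB [v' f' c' H]]]]] := IH (pre ++ g) W' ltac:(by rewrite -catA -WE) vgs FE.
  exists (g :: gs'), ((0 < size g) + a), r, pB; split.
  - by split.
  - by rewrite /= f' WE -catA.
  - by rewrite cnt_cons; lia.
  - rewrite cnt_cons; case: H => [[h1 [h2 h3]]|[h1 [h2 [h3 h4]]]]; [left|right].
      split; first lia. split => // p0 a0.
      apply: h3; last by lia.
      by rewrite p0; apply: size0nil; move: a0; case: (size g) => //=.
    by split; [lia | split].
have [u [[gu Fu]|[Wu Fu]]] := cat_eq_cat E.
  case: (posnP (size u)) => u0.
    move/size0nil: u0 => u0; subst u.
    by apply: (caseA [::]); rewrite ?gu ?cats0.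
  have [V1 [uV1 VV1]] := split_x _ _ u0 Fu.
  have [gs'' [v'' f'' c'']] := @after gs V1 (flatten gs)
      ltac:(by rewrite UE -!catA -uV1 -gu) erefl.
  exists [:: W, m, V1 & gs''], 0, (cnt gs), ((0 < size W) + (0 < size m) + (0 < size V1)).
  have gx : g = W ++ x ++ V1 by rewrite gu uV1.
  split.
  - split.
      case: vg => [sg|ig]; [left | right].
        by move: sg; rewrite gx !size_cat; lia.
      by apply: (@catr_infix _ (x ++ V1)); rewrite -gx.
    split; first by left.
    split.
      case: vg => [sg|ig]; [left | right].
        by move: sg; rewrite gx !size_cat; lia.
      apply: infix_catr; apply: infix_catr.
      apply: infix_trans ig; rewrite gx catA; exact: suffix_infix.
    by rewrite -UE -!catA.
  - by rewrite /= f'' VV1 !catA.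
  - by rewrite !cnt_cons; lia.
  - left; rewrite cnt_cons.
    have gpos : 0 < size g by move: u0; rewrite gx uV1 !size_cat; lia.
    rewrite gpos; split; first by [].
    have := leq_b1 (0 < size W); have := leq_b1 (0 < size V1); have := pos_size m.
    split; first lia.
    move=> p0 _; have := pos_size W; have := pos_size V1.
    have sg : size g <= 1.
      case: vg => // ig; move: ig; rewrite p0 infixs0 => /eqP g0.
      by move: gpos; rewrite g0.
    move: sg; rewrite gx !size_cat; lia.
by apply: (caseA u).
Qed.

End Edit.



Lemma main_bound (U x m V : seq A) : size x <= 1 -> size m <= 1 ->
  exists a r pB, z_SS (U ++ m ++ V) <= a + pB + (2 + size x) * r /\
  ((z_SS (U ++ x ++ V) = a + 1 + r /\ pB <= 2 + size m /\ (a = 0 -> pB + size x <= size m + 1))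
   \/ (z_SS (U ++ x ++ V) = a /\ r = 0 /\ size x = 0 /\ pB <= size m)).
Proof.
move=> hx hm.
have [v [f c]] := z_greedy (U ++ x ++ V).
have [gs' [a [r [pB [v' f' c' H]]]]] := @before U x m V hx hm _ [::] U erefl v f.
exists a, r, pB; split.
  exact: leq_trans (z_le _ _ v' f') c'.
by rewrite -c; case: H => [[h1 [h2 h3]]|h]; [left; split => //; split => //; apply: h3 | right].
Qed.

Lemma z_pos (T : seq A) : 0 < size T -> 0 < z_SS T.
Proof. by case: T. Qed.

End Aux.
Lemma ed_cons (A : eqType) (a b : A) s t : ed (a :: s) (b :: t) =
  minn (minn (ed s (b :: t)).+1 (ed (a :: s) t).+1) (ed s t + (a != b)).
Proof. by []. Qed.
Lemma ed_nil_l (A : eqType) (t : seq A) : ed [::] t = size t.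
Proof. by []. Qed.
Lemma ed_nil_r (A : eqType) (a : A) s : ed (a :: s) [::] = (size s).+1.
Proof. by []. Qed.

Lemma ed0 {A : eqType} {s t : seq A} : ed s t = 0 -> s = t.
Proof.
elim: s t => [|a s IH] [|b t] //; rewrite ?ed_nil_l ?ed_nil_r //.
rewrite ed_cons; case: eqVneq => [<-|ne] /= h.
  by rewrite (IH t) //; lia.
lia.
Qed.

Lemma ed_le1 (A : eqType) (s t : seq A) : ed s t <= 1 -> exists U x m V : seq A,
  [/\ size x <= 1, size m <= 1, s = U ++ x ++ V & t = U ++ m ++ V].
Proof.
elim: s t => [|a s IH] t.
  rewrite ed_nil_l => h; exists [::], [::], t, [::]; by split; rewrite ?cats0.
case: t => [|b t].
  rewrite ed_nil_r => h; exists [::], [:: a], [::], [::].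
  suff -> : s = [::] by split.
  by apply: size0nil; lia.
rewrite ed_cons => h.
have [h1|[h2|h3]] : ed s (b :: t) = 0 \/ ed (a :: s) t = 0 \/ ed s t + (a != b) <= 1 by lia.
- by exists [::], [:: a], [::], s; rewrite (ed0 h1); split.
- by exists [::], [::], [:: b], (a :: s); rewrite (ed0 h2); split.
case: eqVneq h3 => [<-|ne] /= h3.
  have [U [x [m [V [hx hm -> ->]]]]] := IH t ltac:(lia).
  by exists (a :: U), x, m, V; split.
have e0 : ed s t = 0 by lia.
by exists [::], [:: a], [:: b], s; rewrite (ed0 e0); split.
Qed.

Lemma key (A : eqType) (T T' : seq A) : ed T T' = 1 -> exists a r pB X M,
  [/\ X <= 1, M <= 1, size T' + X = size T + M, z_SS T' <= a + pB + (2 + X) * r &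
  ((z_SS T = a + 1 + r /\ pB <= 2 + M /\ (a = 0 -> pB + X <= M + 1))
   \/ (z_SS T = a /\ r = 0 /\ X = 0 /\ pB <= M))].
Proof.
move=> e; have [U [x [m [V [hx hm -> ->]]]]] := @ed_le1 _ T T' (eq_leq e).
have [a [r [pB [h1 h2]]]] := @main_bound _ U x m V hx hm.
exists a, r, pB, (size x), (size m); split => //.
by rewrite !size_cat; lia.
Qed.

Lemma rat_bound (z z' : nat) (eps : rat) : (0 < eps)%R -> z' <= 3 * z ->
  ((z')%:R <= (3%:R + eps) * (z)%:R :> rat)%R.
Proof.
move=> he hz; apply: (@le_trans _ _ ((3 * z)%:R)%R).
  by rewrite ler_nat.
rewrite natrM; apply: ler_wpM2r; first exact: ler0n.
by rewrite lerDl ltW.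
Qed.

Theorem mainTheorem13 (A : eqType) :
  (* substitutions: limsup_n MS_sub(z_SS, n) <= 3 *)
  (forall eps : rat, (0 < eps)%R -> exists N : nat, forall n : nat, (N <= n)%N ->
     forall T T' : seq A, size T = n -> size T' = n -> ed T T' = 1%N ->
       ((z_SS T')%:R <= (3%:R + eps) * (z_SS T)%:R :> rat)%R) /\
  (* substitutions: AS_sub(z_SS, n) <= 2 z_SS - 2 *)
  (forall (n : nat) (T T' : seq A), (0 < n)%N -> size T = n -> size T' = n -> ed T T' = 1%N ->
     ((z_SS T')%:Z - (z_SS T)%:Z <= 2%:Z * (z_SS T)%:Z - 2%:Z)%R) /\
  (* insertions: MS_ins(z_SS, n) <= 2 *)
  (forall (n : nat) (T T' : seq A), (0 < n)%N -> size T = n -> size T' = n.+1 -> ed T T' = 1%N ->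
     ((z_SS T')%:R <= 2%:R * (z_SS T)%:R :> rat)%R) /\
  (* insertions: AS_ins(z_SS, n) <= z_SS *)
  (forall (n : nat) (T T' : seq A), (0 < n)%N -> size T = n -> size T' = n.+1 -> ed T T' = 1%N ->
     ((z_SS T')%:Z - (z_SS T)%:Z <= (z_SS T)%:Z)%R) /\
  (* deletions: limsup_n MS_del(z_SS, n) <= 3 *)
  (forall eps : rat, (0 < eps)%R -> exists N : nat, forall n : nat, (N <= n)%N ->
     forall T T' : seq A, size T = n -> size T' = n.-1 -> ed T T' = 1%N ->
       ((z_SS T')%:R <= (3%:R + eps) * (z_SS T)%:R :> rat)%R) /\
  (* deletions: AS_del(z_SS, n) <= 2 z_SS - 3 *)
  (forall (n : nat) (T T' : seq A), (0 < n)%N -> size T = n -> size T' = n.-1 -> ed T T' = 1%N ->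
     ((z_SS T')%:Z - (z_SS T)%:Z <= 2%:Z * (z_SS T)%:Z - 3%:Z)%R).
Proof.
split.
  move=> eps he; exists 0 => n _ T T' sT sT' e; apply: rat_bound => //.
  have [a [r [pB [X [M [hX hM hs hz H]]]]]] := key _ _ _ e.
  have [X0|X1] : X = 0 \/ X = 1 by lia.
    have M0 : M = 0 by lia. subst; lia.
  have M0 : M = 1 by lia. subst; lia.
split.
  move=> n T T' n0 sT sT' e.
  have zp : 0 < z_SS T by apply: z_pos; lia.
  have [a [r [pB [X [M [hX hM hs hz H]]]]]] := key _ _ _ e.
  have : z_SS T' + 2 <= 3 * z_SS T.
    have [X0|X1] : X = 0 \/ X = 1 by lia.
      have M0 : M = 0 by lia. subst; lia.
    have M0 : M = 1 by lia. subst; lia.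
  lia.
have ins : forall (n : nat) (T T' : seq A), (0 < n)%N -> size T = n -> size T' = n.+1 ->
    ed T T' = 1%N -> z_SS T' <= 2 * z_SS T.
  move=> n T T' n0 sT sT' e.
  have zp : 0 < z_SS T by apply: z_pos; lia.
  have [a [r [pB [X [M [hX hM hs hz H]]]]]] := key _ _ _ e.
  have X0 : X = 0 by lia.
  have M1 : M = 1 by lia.
  subst; lia.
split.
  move=> n T T' n0 sT sT' e; have := ins n T T' n0 sT sT' e.
  by rewrite -natrM ler_nat.
split.
  move=> n T T' n0 sT sT' e; have := ins n T T' n0 sT sT' e; lia.
split.
  move=> eps he; exists 0 => n _ T T' sT sT' e; apply: rat_bound => //.
  have [a [r [pB [X [M [hX hM hs hz H]]]]]] := key _ _ _ e.
  have [X0|X1] : X = 0 \/ X = 1 by lia.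
    have M0 : M = 0 by lia. subst; lia.
  have M0 : M = 0 \/ M = 1 by lia. case: M0 => M0; subst; lia.
move=> n T T' n0 sT sT' e.
have zp : 0 < z_SS T by apply: z_pos; lia.
have [a [r [pB [X [M [hX hM hs hz H]]]]]] := key _ _ _ e.
have X1 : X = 1 by lia.
have M0 : M = 0 by lia.
have : z_SS T' + 3 <= 3 * z_SS T by subst; lia.
lia.
Qed.
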